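(* For all $x\in\mathbb{C}$ and all integers $n\ge0$, \[ \sum_{k=0}^n x^k\big(L_{3k}+(2x-1)F_{3k+3}\big)=2x^{n+1}F_{3n+3} \] and \[ \sum_{k=0}^n x^k\big(5F_{3k}+(2x-1)L_{3k+3}\big)=2x^{n+1}L_{3n+3}-4. \]
   Context: $F_n,L_n$ are the Fibonacci and Lucas numbers: $F_0=0$, $F_1=1$, $L_0=2$, $L_1=1$, $W_n=W_{n-1}+W_{n-2}$. *)

(* Defs.v *)
From HB Require Import structures.
From mathcomp Require Import all_boot all_order all_algebra.
From mathcomp Require Import complex.
From mathcomp Require Import Rstruct.
Set Implicit Arguments. Unset Strict Implicit. Unset Printing Implicit Defensive.

Fixpoint fib (n : nat) : nat :=
  match n with
  | 0 => 0
  | S m => match m with 0 => 1 | S p => fib m + fib p end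
  end.

Fixpoint lucas (n : nat) : nat :=
  match n with
  | 0 => 2
  | S m => match m with 0 => 1 | S p => lucas m + lucas p end
  end.

Definition CC := complex.complex Rdefinitions.R.

(* Main.v *)
Require Import Defs.
From HB Require Import structures.
From mathcomp Require Import all_boot all_order all_algebra.
From mathcomp Require Import complex.
From mathcomp Require Import Rstruct.
From mathcomp Require Import ring zify.
Import GRing.Theory.
Local Open Scope ring_scope.


Lemma fl3 (m : nat) :
  ((fib (m + 3) = 2 * fib m + lucas m /\ lucas (m + 3) = 2 * lucas m + 5 * fib m) /\
  (fib (m.+1 + 3) = 2 * fib m.+1 + lucas m.+1 /\ lucas (m.+1 + 3) = 2 * lucas m.+1 + 5 * fib m.+1))%N.
Proof.
elim: m => [|m [[A1 A2] [B1 B2]]]; first by [].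
split; first by split.
have E : forall k, (k.+2 + 3 = (k + 3).+2)%N by move=> k; rewrite !addnS.
rewrite E. change (fib (m + 3).+2) with (fib (m+3).+1 + fib (m+3))%N.
change (lucas (m + 3).+2) with (lucas (m+3).+1 + lucas (m+3))%N.
rewrite -!addSn A1 A2 B1 B2 /=. split; lia.
Qed.

Theorem corollary4 (x : CC) (n : nat) :
  \sum_(0 <= k < n.+1) x ^+ k * ((lucas (3 * k))%:R + (2 * x - 1) * (fib (3 * k + 3))%:R)
    = 2 * x ^+ n.+1 * (fib (3 * n + 3))%:R
  /\
  \sum_(0 <= k < n.+1) x ^+ k * (5 * (fib (3 * k))%:R + (2 * x - 1) * (lucas (3 * k + 3))%:R)
    = 2 * x ^+ n.+1 * (lucas (3 * n + 3))%:R - 4.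
Proof.
elim: n => [|n [IH1 IH2]].
  rewrite !big_nat1 /=. split; ring.
have R : forall f : nat -> CC, \sum_(0<=k<n.+2) f k = \sum_(0<=k<n.+1) f k + f n.+1.
  by move=> f; rewrite (big_nat_recr n.+1).
rewrite R [in X in _ /\ X]R IH1 IH2.
have E : (3 * n.+1 + 3 = (3 * n + 3) + 3)%N by lia.
have E2 : (3 * n.+1 = 3 * n + 3)%N by lia.
rewrite E E2.
have [[A1 A2] _] := fl3 (3 * n + 3).
rewrite A1 A2 !natrD ?natrM ?exprS.
split.
all: generalize ((fib (3*n+3))%:R : CC) ((lucas (3*n+3))%:R : CC) (x ^+ n) => a b c; ring.
Qed.
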